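(* Let $\theta\in\mathbb{R}^q$ be constant and consider the perturbed regression $y=\phi^\top\theta+d$ with $d$ a bounded scalar signal, in CT or DT, where $\phi$ is bounded (and continuous in CT) and the unperturbed regression is identifiable, i.e. there exist $q$ time instants (positive reals in CT, nonnegative integers in DT) $\tau_1,\dots,\tau_q$ with $\mathrm{rank}[\phi(\tau_1)|\cdots|\phi(\tau_q)]=q$. Let the estimator be: in CT, $\dot{\hat\theta}_g=-\gamma_g(t)\phi\phi^\top\hat\theta_g+\gamma_g(t)\phi y$, $\hat\theta_g(0)=\theta_{g0}$, $\dot\Phi=-\gamma_g(t)\phi\phi^\top\Phi$, $\Phi(0)=I_q$, $\dot{\hat\theta}=\gamma\Delta(Y-\Delta\hat\theta)$; in DT, with $g(k)=1/(\gamma_g(k)+|\phi(k)|^2)$, $\hat\theta_g(k+1)=(I_q-g\phi\phi^\top)\hat\theta_g(k)+g\phi y(k)$, $\Phi(k+1)=(I_q-g\phi\phi^\top)\Phi(k)$, $\Phi(0)=I_q$, $\hat\theta(k+1)=\hat\theta(k)+\frac{\Delta(k)}{\gamma+\Delta^2(k)}(Y(k)-\Delta(k)\hat\theta(k))$; here $\gamma>0$, $\theta_{g0},\hat\theta(0)\in\mathbb{R}^q$ arbitrary, $\mathcal D=I_q-\Phi$, $\Delta=\det\{\mathcal D\}$, $Y=\mathrm{adj}\{\mathcal D\}(\hat\theta_g-\Phi\theta_{g0})$. Suppose the gain $\gamma_g(\cdot)>0$ (continuous in CT) satisfies $\int_0^\infty\gamma_g(t)\,dt<\infty$ in CT, respectively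 $\sum_{k=0}^\infty 1/\gamma_g(k)<\infty$ in DT. Then the parameter error $\tilde\theta:=\hat\theta-\theta$ remains bounded. *)

(* Defs.v *)
From HB Require Import structures.
From mathcomp Require Import all_boot all_order all_algebra.
From mathcomp Require Import all_classical all_reals all_analysis.
Set Implicit Arguments. Unset Strict Implicit. Unset Printing Implicit Defensive.
Import Order.TTheory GRing.Theory Num.Theory.
Import numFieldNormedType.Exports.
Local Open Scope ring_scope.

Definition drem_D {R : pzRingType} {q : nat} (Phi : 'M[R]_q) : 'M[R]_q :=
  1%:M - Phi.
Definition drem_Delta {R : comPzRingType} {q : nat} (Phi : 'M[R]_q) : R :=
  \det (drem_D Phi).
Definition drem_Y {R : comPzRingType} {q : nat} (Phi : 'M[R]_q)
  (thg thg0 : 'cV[R]_q) : 'cV[R]_q :=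
  \adj (drem_D Phi) *m (thg - Phi *m thg0).

(* Main.v *)
Require Import Defs.
From HB Require Import structures.
From mathcomp Require Import all_boot all_order all_algebra.
From mathcomp Require Import all_classical all_reals all_analysis.
From mathcomp Require Import measurable_realfun.
From mathcomp.algebra_tactics Require Import ring lra.
Import Order.TTheory GRing.Theory Num.Theory.
Import numFieldNormedType.Exports.
Local Open Scope classical_set_scope.
Local Open Scope ring_scope.
Set Implicit Arguments. Unset Strict Implicit. Unset Printing Implicit Defensive.

Section Alg.
Variable R : realType.
Variable q : nat.
Implicit Types u v x y : 'cV[R]_q.

Definition ip u v : R := \sum_i u i 0 * v i 0.

Lemma ipC u v : ip u v = ip v u.
Proof. by apply: eq_bigr => i _; rewrite mulrC. Qed.

Lemma ipDl u v x : ip (u + v) x = ip u x + ip v x.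
Proof. by rewrite /ip -big_split; apply: eq_bigr => i _; rewrite mxE mulrDl. Qed.

Lemma ipDr u v x : ip x (u + v) = ip x u + ip x v.
Proof. by rewrite ipC ipDl !(ipC x). Qed.

Lemma ipZl a u v : ip (a *: u) v = a * ip u v.
Proof. by rewrite /ip mulr_sumr; apply: eq_bigr => i _; rewrite mxE mulrA. Qed.

Lemma ipZr a u v : ip u (a *: v) = a * ip u v.
Proof. by rewrite ipC ipZl ipC. Qed.

Lemma ipNl u v : ip (- u) v = - ip u v.
Proof. by rewrite -scaleN1r ipZl mulN1r. Qed.

Lemma ipNr u v : ip u (- v) = - ip u v.
Proof. by rewrite ipC ipNl ipC. Qed.

Lemma ipBl u v x : ip (u - v) x = ip u x - ip v x.
Proof. by rewrite ipDl ipNl. Qed.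

Lemma ipBr u v x : ip x (u - v) = ip x u - ip x v.
Proof. by rewrite ipDr ipNr. Qed.

Lemma ip0l u : ip 0 u = 0.
Proof. by rewrite /ip big1 // => i _; rewrite mxE mul0r. Qed.

Lemma ip0r u : ip u 0 = 0.
Proof. by rewrite ipC ip0l. Qed.

Lemma nrm2_ge0 u : 0 <= ip u u.
Proof. by apply: sumr_ge0 => i _; rewrite -expr2 sqr_ge0. Qed.

Lemma entry_le u i : u i 0 ^+ 2 <= ip u u.
Proof.
rewrite /ip (bigD1 i) //= expr2 lerDl; apply: sumr_ge0 => j _.
by rewrite -expr2 sqr_ge0.
Qed.

Lemma nrm2_eq0 u : ip u u = 0 -> u = 0.
Proof.
move=> H; apply/matrixP => i j; rewrite (ord1 j) mxE.
have := entry_le u i; rewrite H => h.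
by apply/eqP; rewrite -sqrf_eq0 eq_le h sqr_ge0.
Qed.

Lemma ip_mulmx u (A : 'M[R]_q) v : ip u (A *m v) = ip (A^T *m u) v.
Proof.
rewrite /ip.
under eq_bigr do rewrite mxE mulr_sumr.
rewrite exchange_big /=; apply: eq_bigr => j _.
rewrite mxE mulr_suml; apply: eq_bigr => i _.
by rewrite mxE; ring.
Qed.

Lemma ip_le2 u v : 2 * ip u v <= ip u u + ip v v.
Proof.
have := nrm2_ge0 (u - v).
rewrite ipBl !ipBr (ipC v u); lra.
Qed.

Lemma quad_cs (a b c : R) : 0 <= c -> (forall r, 0 <= a + 2 * r * b + r ^+ 2 * c) ->
  b ^+ 2 <= a * c.
Proof.
move=> c0 H.
have a0 : 0 <= a by have := H 0; lra.
have [cgt|] := ltrP 0 c.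
  have := H (- b / c).
  have -> : a + 2 * (- b / c) * b + (- b / c) ^+ 2 * c = a - b ^+ 2 / c.
    by field; rewrite gt_eqF.
  rewrite subr_ge0 ler_pdivrMr //; lra.
move=> cle; have c00 : c = 0 by apply/eqP; rewrite eq_le cle c0.
subst c; rewrite mulr0.
have [b0|bn0] := eqVneq b 0; first by rewrite b0 expr0n.
have := H (- (a + 1) / (2 * b)).
have -> : a + 2 * (- (a + 1) / (2 * b)) * b + (- (a + 1) / (2 * b)) ^+ 2 * 0
  = -1.
  by field.
lra.
Qed.

Lemma cs u v : ip u v ^+ 2 <= ip u u * ip v v.
Proof.
apply: quad_cs; first exact: nrm2_ge0.
move=> r; have := nrm2_ge0 (u + r *: v).
rewrite !ipDl !ipDr !ipZl !ipZr (ipC v u); lra.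
Qed.

Definition fro (A : 'M[R]_q) : R := \sum_i \sum_j A i j ^+ 2.

Lemma fro_ge0 A : 0 <= fro A.
Proof. by apply: sumr_ge0 => i _; apply: sumr_ge0 => j _; exact: sqr_ge0. Qed.

Lemma nrm2_mulmx (A : 'M[R]_q) x : ip (A *m x) (A *m x) <= fro A * ip x x.
Proof.
rewrite /fro mulr_suml; apply: ler_sum => i _.
pose r : 'cV[R]_q := \col_j A i j.
have -> : (A *m x) i 0 = ip r x.
  by rewrite mxE; apply: eq_bigr => j _; rewrite mxE.
have -> : \sum_j A i j ^+ 2 = ip r r.
  by apply: eq_bigr => j _; rewrite mxE expr2.
by rewrite -expr2; exact: cs.
Qed.

Lemma real_t1 (a b c e : R) : 0 <= a -> 0 <= b -> c ^+ 2 <= a * b -> b <= (1 - e) * a -> 0 < e -> e <= 1 ->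
  e ^+ 2 / 4 * a <= a - 2 * c + b.
Proof.
move=> a0 b0 cab ba e0 e1.
set t := 1 - e / 2.
have t0 : 0 < t by rewrite /t; lra.
have h1 : 2 * t * c <= t ^+ 2 * a + b.
  have h : (2 * t * c) ^+ 2 <= (t ^+ 2 * a + b) ^+ 2.
    have : 0 <= (t ^+ 2 * a - b) ^+ 2 by exact: sqr_ge0.
    have : 0 <= t ^+ 2 by exact: sqr_ge0.
    nra.
  have hp : 0 <= t ^+ 2 * a + b by have := sqr_ge0 t; nra.
  case: (lerP 0 (2 * t * c)) => hc; last lra.
  by rewrite -(@ler_pXn2r _ 2) // ?nnegrE.
have h2 : t * (e ^+ 2 / 4 * a) <= t * (a - 2 * c + b).
  rewrite /t in h1 *.
  have : 0 <= e * a by nra.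
  nra.
by rewrite ler_pM2l in h2.
Qed.

Lemma ker_unit (T : 'M[R]_q) : (forall x, T *m x = 0 -> x = 0) -> T \in unitmx.
Proof.
move=> H; rewrite unitmxE unitfE -det_tr; apply/negP => /det0P [v vn0 vT].
have : T *m v^T = 0 by rewrite -[T *m v^T]trmxK trmx_mul trmxK vT trmx0.
move/H => /(congr1 trmx); rewrite trmxK trmx0 => v0.
by rewrite v0 eqxx in vn0.
Qed.

Lemma contr_unif (P : 'M[R]_q) :
  (forall x, x != 0 -> ip (P *m x) (P *m x) < ip x x) ->
  exists eps, [/\ 0 < eps, eps <= 1 & forall x, ip (P *m x) (P *m x) <= (1 - eps) * ip x x].
Proof.
move=> H.
pose T := 1%:M - P^T *m P.
pose B x y := ip x (T *m y).
have BE x y : B x y = ip x y - ip (P *m x) (P *m y).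
  by rewrite /B /T mulmxBl mul1mx ipBr -mulmxA (ip_mulmx x) trmxK.
have Bx0 x : 0 <= B x x.
  rewrite BE subr_ge0; have [->|xn0] := eqVneq x 0.
    by rewrite mulmx0 lexx.
  exact/ltW/H.
have Tsym : T^T = T by rewrite /T linearB /= trmx1 trmx_mul trmxK.
have Tu : T \in unitmx.
  apply: ker_unit => x Tx0; apply/eqP; apply/negP => /negP xn0.
  have := H x xn0; have : B x x = 0 by rewrite /B Tx0 ip0r.
  by rewrite BE; lra.
pose F := fro (invmx T) + 1.
have F0 : 0 < F by rewrite /F; have := fro_ge0 (invmx T); lra.
exists F^-1; split; first by rewrite invr_gt0.
  by rewrite invf_le1 // /F; have := fro_ge0 (invmx T); lra.
move=> x.
have h1 : ip x x <= F * ip (T *m x) (T *m x).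
  rewrite -{1 2}[x](mulKmx Tu); apply: le_trans (nrm2_mulmx _ _) _.
  by apply: ler_wpM2r; [exact: nrm2_ge0| rewrite /F; lra].
have h2 : ip (T *m x) (T *m x) <= B x x.
  have hb : B x (T *m x) = ip (T *m x) (T *m x) by rewrite /B ip_mulmx Tsym.
  have hc : B (T *m x) (T *m x) <= ip (T *m x) (T *m x).
    by rewrite BE; have := nrm2_ge0 (P *m (T *m x)); lra.
  have : B x (T *m x) ^+ 2 <= B x x * B (T *m x) (T *m x).
    apply: quad_cs; first exact: Bx0.
    move=> r; have := Bx0 (x + r *: (T *m x)).
    rewrite !BE !mulmxDr -!scalemxAr !ipDl !ipDr !ipZl !ipZr.
    rewrite (ipC (T *m x) x) (ipC (P *m (T *m x)) (P *m x)); lra.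
  rewrite hb => h.
  have n0 := nrm2_ge0 (T *m x).
  have [z0|zp] := eqVneq (ip (T *m x) (T *m x)) 0; first by rewrite z0.
  have zp' : 0 < ip (T *m x) (T *m x) by rewrite lt_def zp n0.
  have : ip (T *m x) (T *m x) * ip (T *m x) (T *m x) <= B x x * ip (T *m x) (T *m x).
    by rewrite -expr2; apply: le_trans h _; rewrite ler_wpM2l.
  by rewrite ler_pM2r.
have : ip x x <= F * B x x by apply: le_trans h1 _; rewrite ler_wpM2l // ltW.
rewrite BE mulrBl mul1r => h.
rewrite -(ler_pM2l F0) mulrBr mulrA mulfV ?gt_eqF // mul1r; lra.
Qed.


Lemma inv_bound (P : 'M[R]_q) eps : 0 < eps -> eps <= 1 ->
  (forall x, ip (P *m x) (P *m x) <= (1 - eps) * ip x x) ->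
  forall x, eps ^+ 2 / 4 * ip x x <= ip ((1%:M - P) *m x) ((1%:M - P) *m x).
Proof.
move=> e0 e1 H x.
rewrite mulmxBl mul1mx ipBl !ipBr (ipC (P *m x) x).
have -> : ip x x - ip x (P *m x) - (ip x (P *m x) - ip (P *m x) (P *m x))
  = ip x x - 2 * ip x (P *m x) + ip (P *m x) (P *m x) by ring.
apply: real_t1 => //; [exact: nrm2_ge0|exact: nrm2_ge0|exact: cs].
Qed.

Lemma drem_solve (D : 'M[R]_q) kk : 0 < kk ->
  (forall x, kk * ip x x <= ip (D *m x) (D *m x)) ->
  \det D != 0 /\ forall e, exists v,
    [/\ D *m v = e, \adj D *m e = \det D *: v & kk * ip v v <= ip e e].
Proof.
move=> k0 H.
have Du : D \in unitmx.
  apply: ker_unit => x Dx; apply: nrm2_eq0; apply/eqP.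
  rewrite eq_le nrm2_ge0 andbT.
  have := H x; rewrite Dx ip0r => h.
  by rewrite -(pmulr_rle0 _ k0).
have dn0 : \det D != 0 by rewrite -unitfE -unitmxE.
split => // e; exists (invmx D *m e); split.
- by rewrite mulKVmx.
- by rewrite /invmx Du -scalemxAl scalerA mulfV // scale1r.
- have := H (invmx D *m e); by rewrite mulKVmx.
Qed.

Lemma nrm2_convex (l : R) u v : 0 <= l -> l <= 1 ->
  ip ((1 - l) *: u + l *: v) ((1 - l) *: u + l *: v)
  <= (1 - l) * ip u u + l * ip v v.
Proof.
move=> l0 l1.
rewrite !ipDl !ipDr !ipZl !ipZr (ipC v u).
have := ip_le2 u v.
have : 0 <= l * (1 - l) by apply: mulr_ge0; lra.
nra.
Qed.

Lemma outer_mul (phi x : 'cV[R]_q) : (phi *m phi^T) *m x = ip phi x *: phi.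
Proof.
apply/matrixP => i j; rewrite (ord1 j) !mxE.
under eq_bigr do rewrite mxE big_ord1 !mxE.
rewrite /ip mulr_suml; apply: eq_bigr => k _; rewrite [ord0]ord1; ring.
Qed.

Lemma tr_mul00 (phi x : 'cV[R]_q) : (phi^T *m x) 0 0 = ip phi x.
Proof. by rewrite mxE; apply: eq_bigr => k _; rewrite mxE. Qed.

Lemma nrm2_subZ (x phi : 'cV[R]_q) c :
  ip (x - c *: phi) (x - c *: phi)
  = ip x x - 2 * c * ip phi x + c ^+ 2 * ip phi phi.
Proof. rewrite ipBl !ipBr !ipZl !ipZr (ipC x phi); ring. Qed.

Lemma rank_ip0 (f : 'I_q -> 'cV[R]_q) x :
  \rank (\matrix_(i < q, j < q) f j i 0) = q ->
  (forall j, ip x (f j) = 0) -> x = 0.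
Proof.
set M := \matrix_(i < q, j < q) f j i 0 => rk H.
have Mu : M \in unitmx by rewrite -row_free_unit /row_free rk.
have : x^T *m M = 0.
  apply/matrixP => i j; rewrite (ord1 i) [RHS]mxE -[RHS](H j) mxE.
  by apply: eq_bigr => k _; rewrite !mxE.
move=> /(congr1 (mulmx^~ (invmx M))); rewrite mul0mx -mulmxA mulmxV //.
by rewrite mulmx1 => /(congr1 trmx); rewrite trmxK trmx0.
Qed.

Lemma mxnorm_le (u : 'cV[R]_q) : `|u| <= 1 + ip u u.
Proof.
rewrite [leLHS]/Num.Def.normr/= mx_normrE.
apply: bigmax_le; first by have := nrm2_ge0 u; lra.
move=> [i j] _ /=; rewrite (ord1 j).
have := entry_le u i.
have : `|u i 0| <= 1 + u i 0 ^+ 2.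
  rewrite -(real_normK (num_real (u i 0))).
  have := normr_ge0 (u i 0); set a := `|u i 0|; nra.
lra.
Qed.

End Alg.


Lemma series_bound (R : realType) (u : nat -> R) : (forall n, 0 <= u n) ->
  (\sum_(0 <= k <oo) (u k)%:E < +oo)%E ->
  exists S, forall n, \sum_(0 <= k < n) u k <= S.
Proof.
move=> u0 H.
set L := (\sum_(0 <= k <oo) (u k)%:E)%E in H.
have L0 : (0 <= L)%E by apply: nneseries_ge0 => n _; rewrite lee_fin.
have Lf : L \is a fin_num by rewrite ge0_fin_numE.
exists (fine L) => n.
rewrite -lee_fin fineK // -sumEFin.
by apply: nneseries_lim_ge => k _ _; rewrite lee_fin.
Qed.

Lemma le_maxl' (R : realType) (a b : R) : a <= Num.max a b.
Proof. by rewrite le_max lexx. Qed.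
Lemma le_maxr' (R : realType) (a b : R) : b <= Num.max a b.
Proof. by rewrite le_max lexx orbT. Qed.

Section DTlemmas.
Variable R : realType.
Variable q : nat.

Lemma A_mul (phi x : 'cV[R]_q) (g : R) :
  (1%:M - g *: (phi *m phi^T)) *m x = x - (g * ip phi x) *: phi.
Proof. by rewrite mulmxBl mul1mx -scalemxAl outer_mul scalerA. Qed.

Lemma A_nrm2 (phi x : 'cV[R]_q) (g : R) :
  ip ((1%:M - g *: (phi *m phi^T)) *m x) ((1%:M - g *: (phi *m phi^T)) *m x)
  = ip x x - g * ip phi x ^+ 2 * (2 - g * ip phi phi).
Proof. rewrite A_mul nrm2_subZ; ring. Qed.

Lemma g_facts (gm p : R) : 0 < gm -> 0 <= p ->
  [/\ 0 < (gm + p)^-1, (gm + p)^-1 * p <= 1 & (gm + p)^-1 <= gm^-1].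
Proof.
move=> g0 p0; have gp : 0 < gm + p by lra.
split; first by rewrite invr_gt0.
  by rewrite mulrC ler_pdivrMr // mul1r; lra.
by rewrite lef_pV2 ?posrE //; lra.
Qed.

Lemma e_step (phi e : 'cV[R]_q) (gm dd g : R) : 0 < gm ->
  g = (gm + ip phi phi)^-1 ->
  ip ((1%:M - g *: (phi *m phi^T)) *m e + (g * dd) *: phi)
     ((1%:M - g *: (phi *m phi^T)) *m e + (g * dd) *: phi)
  <= ip e e + dd ^+ 2 / gm.
Proof.
move=> g0 gE.
have [ga gb gc] := g_facts g0 (nrm2_ge0 phi).
rewrite -gE in ga gb gc.
rewrite A_mul.
have -> : e - (g * ip phi e) *: phi + (g * dd) *: phi
  = e - (g * (ip phi e - dd)) *: phi.
  by rewrite mulrBr scalerBl opprB addrA addrAC.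
rewrite nrm2_subZ.
set s := ip phi e; set p := ip phi phi.
have h1 : g * dd ^+ 2 <= dd ^+ 2 / gm.
  by rewrite mulrC ler_wpM2l // sqr_ge0.
suff : - 2 * (g * (s - dd)) * s + (g * (s - dd)) ^+ 2 * p <= g * dd ^+ 2 by lra.
have hp : 0 <= p by exact: nrm2_ge0.
have : (g * (s - dd)) ^+ 2 * p = g * (s - dd) ^+ 2 * (g * p) by ring.
move=> ->.
have : g * (s - dd) ^+ 2 * (g * p) <= g * (s - dd) ^+ 2.
  rewrite -[X in _ <= X]mulr1; apply: ler_wpM2l => //.
  by apply: mulr_ge0; [exact: ltW| exact: sqr_ge0].
have : 0 <= g * s ^+ 2 by apply: mulr_ge0; [exact: ltW| exact: sqr_ge0].
nra.
Qed.

Lemma ee_identity (Ph : 'M[R]_q) (th0 tg th phi : 'cV[R]_q) (g dd : R) :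
  let A := 1%:M - g *: (phi *m phi^T) in
  A *m tg + (g * (ip phi th + dd)) *: phi - A *m Ph *m th0
    - (1%:M - A *m Ph) *m th
  = A *m (tg - Ph *m th0 - (1%:M - Ph) *m th) + (g * dd) *: phi.
Proof.
move=> A; rewrite /A.
rewrite !mulmxBr !mulmxBl !mul1mx ?mulmxDr ?mulmxBr -!mulmxA -!scalemxAl !outer_mul.
apply/matrixP => i j; rewrite !mxE ?ipNr; ring.
Qed.

Lemma u_identity (Ph : 'M[R]_q) (tg th0 th h v : 'cV[R]_q) (c : R) :
  \adj (1%:M - Ph) *m (tg - Ph *m th0 - (1%:M - Ph) *m th)
    = \det (1%:M - Ph) *: v ->
  h + c *: (\adj (1%:M - Ph) *m (tg - Ph *m th0) - \det (1%:M - Ph) *: h) - th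
  = (1 - c * \det (1%:M - Ph)) *: (h - th) + (c * \det (1%:M - Ph)) *: v.
Proof.
set D := 1%:M - Ph; set e := tg - _ - _ => hv.
have -> : tg - Ph *m th0 = D *m th + e by rewrite /e [RHS]addrC subrK.
rewrite mulmxDr hv mulmxA mul_adj_mx mul_scalar_mx.
apply/matrixP => i j; rewrite !mxE; ring.
Qed.

End DTlemmas.


Section Cont.
Variable R : realType.
Variable A : set R.

Lemma cw_comp (T U : topologicalType) (f : R -> T) (g : T -> U) :
  {within A, continuous f} -> continuous g ->
  {within A, continuous (fun t => g (f t))}.
Proof. move=> cf cg x; apply: continuous_comp; [exact: cf|exact: cg]. Qed.

Lemma cw_entry m n (M : R -> 'M[R]_(m, n)) i j :
  {within A, continuous M} -> {within A, continuous (fun t => M t i j)}.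
Proof. move=> cM; exact: cw_comp cM (@coord_continuous _ _ _ i j). Qed.

Lemma cwD (f g : R -> R) : {within A, continuous f} -> {within A, continuous g} ->
  {within A, continuous (fun t => f t + g t)}.
Proof. by move=> cf cg x; apply: continuousD; [exact: cf|exact: cg]. Qed.

Lemma cwN (f : R -> R) : {within A, continuous f} ->
  {within A, continuous (fun t => - f t)}.
Proof. by move=> cf x; apply: continuousN; exact: cf. Qed.

Lemma cwB (f g : R -> R) : {within A, continuous f} -> {within A, continuous g} ->
  {within A, continuous (fun t => f t - g t)}.
Proof. by move=> cf cg; apply: cwD => //; exact: cwN. Qed.

Lemma cwM (f g : R -> R) : {within A, continuous f} -> {within A, continuous g} ->
  {within A, continuous (fun t => f t * g t)}.
Proof. by move=> cf cg x; apply: continuousM; [exact: cf|exact: cg]. Qed.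

Lemma cw_cst (c : R) : {within A, continuous (fun _ : R => c)}.
Proof. by move=> x; apply: cst_continuous. Qed.

Lemma cw_sum n (h : 'I_n -> R -> R) : (forall i, {within A, continuous (h i)}) ->
  {within A, continuous (fun t => \sum_(i < n) h i t)}.
Proof.
move=> H; elim: n h H => [|n IH] h H.
  by under eq_fun do rewrite big_ord0; exact: cw_cst.
under eq_fun do rewrite big_ord_recr /=.
apply: cwD; last exact: H.
exact: (IH (fun i => h (widen_ord (leqnSn n) i))).
Qed.

Definition ecw q (u : R -> 'cV[R]_q) :=
  forall i, {within A, continuous (fun t => u t i 0)}.

Lemma ecw_of q (u : R -> 'cV[R]_q) : {within A, continuous u} -> ecw u.
Proof. by move=> cu i; exact: cw_entry. Qed.

Lemma ecwB q (u v : R -> 'cV[R]_q) : ecw u -> ecw v -> ecw (fun t => u t - v t).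
Proof. by move=> cu cv i; under eq_fun do rewrite !mxE; exact: cwB. Qed.

Lemma ecw_cst q (c : 'cV[R]_q) : ecw (fun _ => c).
Proof. by move=> i; exact: cw_cst. Qed.

Lemma ecw_mulmxr q (M : R -> 'M[R]_q) (c : 'cV[R]_q) :
  {within A, continuous M} -> ecw (fun t => M t *m c).
Proof.
move=> cM i; under eq_fun do rewrite mxE.
apply: cw_sum => j; apply: cwM; [exact: cw_entry|exact: cw_cst].
Qed.

Lemma cw_ip q (u v : R -> 'cV[R]_q) : ecw u -> ecw v ->
  {within A, continuous (fun t => ip (u t) (v t))}.
Proof. by move=> cu cv; apply: cw_sum => i; exact: cwM. Qed.

End Cont.

Section Der.
Variable R : realType.

Lemma isd_entry m n (M : R -> 'M[R]_(m, n)) (t : R) (dM : 'M[R]_(m, n)) i j :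
  is_derive t 1 M dM -> is_derive t 1 (fun x => M x i j) (dM i j).
Proof.
move=> [dv dval].
have dij : derivable (fun x => M x i j) t 1 by move/derivable_mxP: dv; apply.
apply: DeriveDef => //.
by move: dval; rewrite derive_mx // => <-; rewrite mxE.
Qed.

Definition ed q (u : R -> 'cV[R]_q) (t : R) (du : 'cV[R]_q) :=
  forall i, is_derive t 1 (fun x => u x i 0) (du i 0).

Lemma ed_of q (u : R -> 'cV[R]_q) (t : R) (du : 'cV[R]_q) : is_derive t 1 u du -> ed u t du.
Proof. by move=> H i; exact: isd_entry. Qed.

Lemma isdD (f g : R -> R) (t df dg : R) : is_derive t 1 f df -> is_derive t 1 g dg ->
  is_derive t 1 (fun x => f x + g x) (df + dg).
Proof. by move=> ? ?; apply: is_deriveD. Qed.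

Lemma isdN (f : R -> R) (t df : R) : is_derive t 1 f df ->
  is_derive t 1 (fun x => - f x) (- df).
Proof. by move=> ?; apply: is_deriveN. Qed.

Lemma isdB (f g : R -> R) (t df dg : R) : is_derive t 1 f df -> is_derive t 1 g dg ->
  is_derive t 1 (fun x => f x - g x) (df - dg).
Proof. by move=> ? ?; apply: isdD => //; exact: isdN. Qed.

Lemma isdM (f g : R -> R) (t df dg : R) : is_derive t 1 f df -> is_derive t 1 g dg ->
  is_derive t 1 (fun x => f x * g x) (f t * dg + g t * df).
Proof. by move=> ? ?; apply: is_deriveM. Qed.

Lemma isd_cst (c t : R) : is_derive t 1 (fun _ : R => c) 0.
Proof. exact: is_derive_cst. Qed.

Lemma isd_sum n (h : 'I_n -> R -> R) (t : R) (dh : 'I_n -> R) :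
  (forall i, is_derive t 1 (h i) (dh i)) ->
  is_derive t 1 (fun x => \sum_(i < n) h i x) (\sum_(i < n) dh i).
Proof.
move=> H; have := is_derive_sum H; by rewrite fct_sumE.
Qed.

Lemma edB q (u v : R -> 'cV[R]_q) (t : R) (du dv : 'cV[R]_q) : ed u t du -> ed v t dv ->
  ed (fun x => u x - v x) t (du - dv).
Proof.
move=> hu hv i.
have -> : (fun x => (u x - v x) i 0) = (fun x => u x i 0 - v x i 0).
  by apply/funext => x; rewrite !mxE.
by rewrite !mxE; exact: isdB.
Qed.

Lemma ed_cst q (c : 'cV[R]_q) (t : R) : ed (fun _ => c) t 0.
Proof. by move=> i; rewrite mxE; exact: isd_cst. Qed.

Lemma ed_mulmxr q (M : R -> 'M[R]_q) (c : 'cV[R]_q) (t : R) (dM : 'M[R]_q) :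
  is_derive t 1 M dM -> ed (fun x => M x *m c) t (dM *m c).
Proof.
move=> HM i.
have -> : (fun x => (M x *m c) i 0) = (fun x => \sum_j M x i j * c j 0).
  by apply/funext => x; rewrite !mxE.
rewrite mxE; apply: isd_sum => j.
have := isdM (isd_entry i j HM) (isd_cst (c j 0) t).
by rewrite mulr0 add0r mulrC.
Qed.

Lemma ed_ip q (u v : R -> 'cV[R]_q) (t : R) (du dv : 'cV[R]_q) : ed u t du -> ed v t dv ->
  is_derive t 1 (fun x => ip (u x) (v x)) (ip (u t) dv + ip du (v t)).
Proof.
move=> hu hv; rewrite /ip -big_split /=; apply: isd_sum => i.
by have := isdM (hu i) (hv i); rewrite [_ * du i 0]mulrC.
Qed.

Lemma ed_nrm2 q (u : R -> 'cV[R]_q) (t : R) (du : 'cV[R]_q) : ed u t du ->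
  is_derive t 1 (fun x => ip (u x) (u x)) (2 * ip (u t) du).
Proof. by move=> hu; have := ed_ip hu hu; rewrite (ipC du); rewrite mulr2n mulrDl mul1r. Qed.

End Der.

Section Mono.
Variable R : realType.

Lemma nincr (f df : R -> R) (a b : R) : a <= b ->
  (forall x, a < x -> x < b -> is_derive x 1 f (df x)) ->
  (forall x, a < x -> x < b -> df x <= 0) ->
  {within `[a, b], continuous f} -> f b <= f a.
Proof.
move=> ab Hd Hn cf.
apply: (@ler0_derive1_le_cc _ f a b) => //.
- move=> x; rewrite in_itv /= => /andP [ax xb].
  by have := Hd x ax xb => -[].
- move=> x; rewrite in_itv /= => /andP [ax xb].
  have := Hd x ax xb => hd; rewrite derive1E derive_val; exact: Hn.
- by rewrite in_itv /= lexx ab.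
- by rewrite in_itv /= lexx ab.
Qed.

Lemma nincr_y (f df : R -> R) (a : R) :
  (forall x, a < x -> is_derive x 1 f (df x)) ->
  (forall x, a < x -> df x <= 0) ->
  {within `[a, +oo[, continuous f} -> forall t, a <= t -> f t <= f a.
Proof.
move=> Hd Hn cf t at_; apply: (nincr at_).
- by move=> x ax _; exact: Hd.
- by move=> x ax _; exact: Hn.
- by apply: continuous_subspaceW cf; apply: subset_itvl; rewrite bnd_simp.
Qed.

Lemma mono_y (f df : R -> R) (a : R) :
  (forall x, a < x -> is_derive x 1 f (df x)) ->
  (forall x, a < x -> df x <= 0) ->
  {within `[a, +oo[, continuous f} ->
  forall s t, a <= s -> s <= t -> f t <= f s.
Proof.
move=> Hd Hn cf s t as_ st; apply: (nincr st).
- move=> x sx _; apply: Hd; exact: le_lt_trans as_ sx.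
- move=> x sx _; apply: Hn; exact: le_lt_trans as_ sx.
- apply: continuous_subspaceW cf; apply: subset_itv; by rewrite bnd_simp.
Qed.

Lemma barrier (f df : R -> R) (T m : R) :
  (forall x, T < x -> is_derive x 1 f (df x)) ->
  (forall x, T < x -> m <= f x -> df x <= 0) ->
  {within `[T, +oo[, continuous f} ->
  forall t, T <= t -> f t <= Num.max (f T) m.
Proof.
move=> Hd Hn cf t Tt.
set m' := Num.max (f T) m.
have fTm : f T <= m' by rewrite le_max lexx.
have mm : m <= m' by rewrite le_max lexx orbT.
rewrite leNgt; apply/negP => ft.
have Tlt : T < t.
  rewrite lt_def Tt andbT; apply/eqP => tT; move: ft; rewrite tT.
  by rewrite ltNge fTm.
pose S := [set s | T <= s <= t /\ f s <= m'].
have S0 : S T by rewrite /S /= lexx Tt.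
have Sub : ubound S t by move=> s [/andP [_ ->]].
have hS : has_sup S by split; [exists T|exists t].
set s0 := sup S.
have Ts0 : T <= s0 by exact: sup_upper_bound.
have s0t : s0 <= t by apply: ge_sup => //; exists T.
have fs0 : f s0 <= m'.
  rewrite leNgt; apply/negP => fs.
  have Ts0' : T < s0.
    rewrite lt_def Ts0 andbT; apply/eqP => sT; move: fs.
    by rewrite sT ltNge fTm.
  have cs : {for s0, continuous f}.
    have := Hd s0 Ts0' => -[dv _].
    by apply: differentiable_continuous; apply/derivable1_diffP.
  have := cvgr_gt (f s0) cs m' fs.
  move=> Hn0; have [e e0 He] := (nbhs_ballP s0 _).1 (Hn0 (nbhs_filter s0)).
  have [s Ss hs] := sup_adherent e0 hS.
  have ss0 : s <= s0 by exact: sup_upper_bound.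
  have : ball s0 e s.
    rewrite -ball_normE /= ger0_norm ?subr_ge0 //; rewrite -/s0 in hs; lra.
  move/He; case: Ss => _ fsm /=; rewrite ltNge fsm //.
have s0t' : s0 < t.
  rewrite lt_def s0t andbT; apply/eqP => st; move: ft; rewrite st.
  by rewrite ltNge fs0.
have out x : s0 < x -> x <= t -> m' < f x.
  move=> sx xt; rewrite ltNge; apply/negP => fx.
  have : S x by split => //; rewrite xt andbT; apply: le_trans Ts0 (ltW sx).
  move/sup_upper_bound: hS => /(_ x) h /h; rewrite -/s0 leNgt sx //.
have : f t <= f s0.
  apply: (nincr s0t).
  - move=> x sx _; apply: Hd; exact: le_lt_trans Ts0 sx.
  - move=> x sx xt; apply: Hn; first exact: le_lt_trans Ts0 sx.
    by apply: le_trans mm (ltW (out x sx (ltW xt))).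
  - apply: continuous_subspaceW cf; apply: subset_itv; rewrite bnd_simp //.

lra.
Qed.

End Mono.

Section Integ.
Variable R : realType.
Local Notation mu := (@lebesgue_measure R).

Lemma cont_interior (f : R -> R) (a t : R) : a < t ->
  {within `[a, +oo[, continuous f} -> {for t, continuous f}.
Proof.
move=> at_ cf.
have : {within `]a, +oo[, continuous f}.
  by apply: continuous_subspaceW cf; apply: subset_itvr; rewrite bnd_simp.
rewrite continuous_open_subspace; last exact: interval_open.
by apply; rewrite inE /= in_itv /= andbT.
Qed.

Lemma integral_facts (g : R -> R) :
  (forall t, 0 <= t -> 0 < g t) ->
  {within `[0, +oo[, continuous g} ->
  (\int[mu]_(t in `[0%R, +oo[) (g t)%:E < +oo)%E ->
  exists Gm : R, 
  [/\ forall t : R, 0 <= t -> 0 <= (\int[mu]_(x in `[0, t]) g x)%R <= Gm,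
      forall t : R, 0 < t -> is_derive t (1 : R) (fun t : R => (\int[mu]_(x in `[0, t]) g x)%R) (g t)
    & forall b : R, 0 <= b -> {within `[0, b], continuous (fun t : R => (\int[mu]_(x in `[0, t]) g x)%R)}].
Proof.
move=> g0 cg Hfin.
have mI : measurable (`[0%R, +oo[ : set R) by exact: measurable_itv.
have mg : measurable_fun (`[0%R, +oo[ : set R) g.
  exact: subspace_continuous_measurable_fun.
have g0' : forall x, `[0%R, +oo[%classic x -> (0 <= (g x)%:E)%E.
  move=> x; rewrite /= in_itv /= andbT => x0; rewrite lee_fin; exact/ltW/g0.
have intI : mu.-integrable `[0%R, +oo[ (EFin \o g).
  apply/integrableP; split; first exact/measurable_EFinP.
  rewrite (@eq_integral _ _ _ mu _ (fun x => (g x)%:E) (fun x => `|(EFin \o g) x|%E)) //.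
  move=> x; rewrite inE => /g0' h /=; rewrite ger0_norm // -lee_fin.
have intb b : mu.-integrable `[0, b] (EFin \o g).
  apply: integrableS intI => //.
  by apply: subset_itvl; rewrite bnd_simp.
set Gi := (\int[mu]_(t in `[0%R, +oo[) (g t)%:E)%E in Hfin.
have Gi0 : (0 <= Gi)%E by apply: integral_ge0.
have Gif : Gi \is a fin_num by rewrite ge0_fin_numE.
exists (fine Gi); split.
- move=> t t0; apply/andP; split.
    apply: Rintegral_ge0 => x; rewrite /= in_itv /= => /andP [x0 _].
    exact/ltW/g0.
  have hsub : (\int[mu]_(x in `[0%R, t]) (g x)%:E <= Gi)%E.
    apply: ge0_subset_integral => //.
    - exact/measurable_EFinP.
    - by apply: subset_itvl; rewrite bnd_simp.
  have f1 : (\int[mu]_(x in `[0%R, t]) (g x)%:E)%E \is a fin_num.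
    rewrite ge0_fin_numE; first exact: le_lt_trans hsub Hfin.
    apply: integral_ge0 => x; rewrite /= in_itv /= => /andP [x0 _].
    by rewrite lee_fin; exact/ltW/g0.
  by rewrite -lee_fin fineK // fineK.
- move=> t t0.
  have t1 : t < t + 1 by rewrite ltrDl.
  have [dv dval] := @continuous_FTC1_closed R g 0 t (t + 1) t1
     (intb (t + 1)) t0 (cont_interior t0 cg).
  apply: DeriveDef => //; by rewrite -derive1E.
- move=> b b0.
  exact: (@parameterized_integral_continuous R 0 b g b0 (intb b)).
Qed.

End Integ.

Section CTalg.
Variable R : realType.
Variable q : nat.

Lemma dPhi_mul (phi x : 'cV[R]_q) (P : 'M[R]_q) (c : R) :
  ((- c) *: (phi *m phi^T *m P)) *m x = (- c * ip phi (P *m x)) *: phi.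
Proof. by rewrite -scalemxAl -(mulmxA (phi *m phi^T)) outer_mul scalerA. Qed.

Lemma dPhi_val (phi x : 'cV[R]_q) (P : 'M[R]_q) (c : R) :
  2 * ip (P *m x) (((- c) *: (phi *m phi^T *m P)) *m x)
  = - (2 * c * ip phi (P *m x) ^+ 2).
Proof. rewrite dPhi_mul ipZr (ipC (P *m x)); ring. Qed.

Lemma de_val (phi tg th0 th : 'cV[R]_q) (P : 'M[R]_q) (c dd : R) :
  let e := tg - P *m (th0 - th) - th in
  ip e ((- c) *: (phi *m phi^T *m tg) + (c * (ip phi th + dd)) *: phi
        - ((- c) *: (phi *m phi^T *m P)) *m (th0 - th) - 0)
  = c * (dd - ip phi e) * ip phi e.
Proof.
move=> e; rewrite dPhi_mul outer_mul subr0 !ipDr !ipNr !ipZr.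
rewrite (ipC e phi) /e !ipBr; ring.
Qed.

Lemma Y_identity (Ph : 'M[R]_q) (tg th0 th h v : 'cV[R]_q) :
  \adj (1%:M - Ph) *m (tg - Ph *m (th0 - th) - th) = \det (1%:M - Ph) *: v ->
  \adj (1%:M - Ph) *m (tg - Ph *m th0) - \det (1%:M - Ph) *: h
  = \det (1%:M - Ph) *: (v - (h - th)).
Proof.
set D := 1%:M - Ph; set e := tg - _ - _ => hv.
have -> : tg - Ph *m th0 = D *m th + e.
  rewrite /e /D mulmxBl mul1mx mulmxBr; apply/matrixP => i j; rewrite !mxE.
  set a := \sum_(k < q) _; set b := \sum_(k < q) _; ring.
rewrite mulmxDr hv mulmxA mul_adj_mx mul_scalar_mx.
apply/matrixP => i j; rewrite !mxE; ring.
Qed.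

End CTalg.


Lemma dt_part :
  (forall (R : realType) (q : nat) (theta : 'cV[R]_q)
     (phi : nat -> 'cV[R]_q) (d y : nat -> R) (gamma_g : nat -> R) (gam : R)
     (thg0 : 'cV[R]_q) (thg : nat -> 'cV[R]_q) (Phi : nat -> 'M[R]_q)
     (thh : nat -> 'cV[R]_q),
   (exists M : R, forall k, `|phi k| <= M) ->
   (exists M : R, forall k, `|d k| <= M) ->
   (forall k, y k = ((phi k)^T *m theta) 0 0 + d k) ->
   (exists tau : 'I_q -> nat,
      \rank (\matrix_(i < q, j < q) phi (tau j) i 0) = q) ->
   (forall k, 0 < gamma_g k) ->
   (\sum_(0 <= k <oo) ((gamma_g k)^-1)%:E < +oo)%E ->
   0 < gam ->
   let g := fun k => (gamma_g k + ((phi k)^T *m phi k) 0 0)^-1 in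
   thg 0%N = thg0 ->
   Phi 0%N = 1%:M ->
   (forall k, thg k.+1 = (1%:M - g k *: (phi k *m (phi k)^T)) *m thg k
                         + (g k * y k) *: phi k) ->
   (forall k, Phi k.+1 = (1%:M - g k *: (phi k *m (phi k)^T)) *m Phi k) ->
   (forall k, thh k.+1 = thh k
      + (drem_Delta (Phi k) / (gam + drem_Delta (Phi k) ^+ 2)) *:
          (drem_Y (Phi k) (thg k) thg0 - drem_Delta (Phi k) *: thh k)) ->
   exists M : R, forall k, `|thh k - theta| <= M).
Proof.
move=> R q theta phi d y gm gam thg0 thg Phi thh _ [Md Hd] Hy [tau Hrank]
  Hg0 Hsum Hgam g Hthg0 HPhi0 Hthg HPhi Hthh.
have gE k : g k = (gm k + ip (phi k) (phi k))^-1 by rewrite /g tr_mul00.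
set A := fun k => 1%:M - g k *: (phi k *m (phi k)^T).
have gpos k : 0 < g k by have [] := g_facts (Hg0 k) (nrm2_ge0 (phi k)); rewrite -gE.
have gp1 k : g k * ip (phi k) (phi k) <= 1.
  by have [] := g_facts (Hg0 k) (nrm2_ge0 (phi k)); rewrite -gE.
have PhiS k x : ip (Phi k.+1 *m x) (Phi k.+1 *m x)
   = ip (Phi k *m x) (Phi k *m x)
     - g k * ip (phi k) (Phi k *m x) ^+ 2 * (2 - g k * ip (phi k) (phi k)).
  by rewrite HPhi -mulmxA A_nrm2.
have Pmono k x : ip (Phi k.+1 *m x) (Phi k.+1 *m x) <= ip (Phi k *m x) (Phi k *m x).
  rewrite PhiS gerBl; apply: mulr_ge0; last by have := gp1 k; lra.
  by apply: mulr_ge0; [exact: ltW|exact: sqr_ge0].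
have Pmono' x j k : (j <= k)%N ->
    ip (Phi k *m x) (Phi k *m x) <= ip (Phi j *m x) (Phi j *m x).
  elim: k => [|k IH]; first by rewrite leqn0 => /eqP ->.
  rewrite leq_eqVlt => /orP [/eqP -> //|]; rewrite ltnS => /IH.
  exact: le_trans (Pmono _ _).
pose K := (\sum_i tau i).+1.
have strict x : x != 0 -> ip (Phi K *m x) (Phi K *m x) < ip x x.
  move=> xn0; rewrite ltNge; apply/negP => hK.
  have eqj j : (j <= K)%N -> ip (Phi j *m x) (Phi j *m x) = ip x x.
    move=> jK; apply/eqP; rewrite eq_le.
    have := Pmono' x 0%N j (leq0n _); rewrite HPhi0 mul1mx => ->.
    by apply: le_trans hK _; exact: Pmono'.
  have sj j : (j < K)%N -> ip (phi j) (Phi j *m x) = 0.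
    move=> jK; have := PhiS j x; rewrite !eqj // ?(ltnW jK) //.
    move=> /eqP; rewrite -subr_eq0 opprB addrC subrK mulf_eq0 mulf_eq0.
    rewrite (gt_eqF (gpos j)) /= sqrf_eq0.
    have : 2 - g j * ip (phi j) (phi j) != 0.
      by apply: lt0r_neq0; have := gp1 j; lra.
    by move/negPf => -> /orP [/eqP //|].
  have xj j : (j <= K)%N -> Phi j *m x = x.
    elim: j => [_|j IH jK]; first by rewrite HPhi0 mul1mx.
    rewrite HPhi -mulmxA A_mul sj // IH ?(ltnW jK) //.
    by rewrite mulr0 scale0r subr0.
  apply/negP: xn0; rewrite negbK; apply/eqP.
  apply: (rank_ip0 Hrank) => i.
  have ti : (tau i < K)%N.
    by rewrite ltnS (bigD1 i) //= leq_addr.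
  by rewrite ipC -{1}(xj (tau i) (ltnW ti)) sj.
have [eps [e0 e1 Heps]] := contr_unif strict.
set kk := eps ^+ 2 / 4.
have kk0 : 0 < kk by rewrite /kk; apply: divr_gt0 => //; exact: exprn_gt0.
have invb k : (K <= k)%N -> forall x,
    kk * ip x x <= ip ((1%:M - Phi k) *m x) ((1%:M - Phi k) *m x).
  move=> Kk; apply: inv_bound => // x.
  by apply: le_trans (Heps x); exact: Pmono'.
pose ee k := thg k - Phi k *m thg0 - (1%:M - Phi k) *m theta.
have ee0 : ee 0%N = 0 by rewrite /ee Hthg0 HPhi0 mul1mx !subrr mul0mx subrr.
have eeS k : ee k.+1 = A k *m ee k + (g k * d k) *: phi k.
  rewrite /ee Hthg HPhi -/(A k) Hy tr_mul00.
  exact: ee_identity.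
have [Md2 Hd2] : exists Md2, forall k, d k ^+ 2 <= Md2.
  exists (Md ^+ 2) => k; rewrite -(real_normK (num_real (d k))).
  by rewrite !expr2; apply: ler_pM => //; exact: normr_ge0.
have Md20 : 0 <= Md2 by apply: le_trans (Hd2 0%N); exact: sqr_ge0.
have ginv0 k : 0 <= (gm k)^-1 by rewrite invr_ge0; exact: ltW.
have [S HS] := @series_bound _ (fun k => (gm k)^-1) ginv0 Hsum.
have eeB' k : ip (ee k) (ee k) <= Md2 * \sum_(0 <= j < k) (gm j)^-1.
  elim: k => [|k IH]; first by rewrite ee0 ip0l big_geq // mulr0.
  rewrite eeS big_nat_recr //= mulrDr.
  apply: le_trans (e_step (ee k) (d k) (Hg0 k) (gE k)) _.
  apply: lerD => //; apply: ler_wpM2r; [exact: ginv0|exact: Hd2].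
have eeB k : ip (ee k) (ee k) <= Md2 * S.
  by apply: le_trans (eeB' k) _; apply: ler_wpM2l => //; exact: HS.
pose uu k := thh k - theta.
pose Bv := Md2 * S / kk.
have uS k : (K <= k)%N ->
    ip (uu k.+1) (uu k.+1) <= Num.max (ip (uu k) (uu k)) Bv.
  move=> Kk.
  have [dn0 Hv] := drem_solve kk0 (invb k Kk).
  have [v [Dv hv vb]] := Hv (ee k).
  set Dl := \det (1%:M - Phi k) in dn0 hv.
  set c := Dl / (gam + Dl ^+ 2).
  have hl : 0 <= c * Dl <= 1.
    have Dp : 0 < gam + Dl ^+ 2 by have := sqr_ge0 Dl; lra.
    rewrite /c mulrAC -expr2 divr_ge0 ?sqr_ge0 ?ltW //=.
    by rewrite ltr_pdivrMr // mul1r; lra.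
  have -> : uu k.+1 = (1 - c * Dl) *: uu k + (c * Dl) *: v.
    by rewrite /uu Hthh; exact: u_identity.
  have [l0' l1'] := andP hl.
  apply: le_trans (nrm2_convex _ _ l0' l1') _.
  have vB : ip v v <= Bv.
    rewrite /Bv ler_pdivlMr // mulrC; exact: le_trans vb (eeB k).
  set a := ip (uu k) (uu k); set l := c * Dl.
  case/andP: hl => l0 l1.
  have h1 := le_maxr' a Bv; have h2 := le_maxl' a Bv.
  set m := Num.max a Bv in h1 h2 *.
  have h3 : (1 - l) * a <= (1 - l) * m.
    by apply: ler_wpM2l => //; rewrite subr_ge0.
  have h4 : l * ip v v <= l * m by apply: ler_wpM2l => //; exact: le_trans vB h1.
  lra.
have uK n : ip (uu (K + n)%N) (uu (K + n)%N) <= Num.max (ip (uu K) (uu K)) Bv.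
  elim: n => [|n IH]; first by rewrite addn0 le_maxl'.
  rewrite addnS; apply: le_trans (uS _ (leq_addr _ _)) _.
  by rewrite ge_max IH le_maxr'.
exists (1 + (\sum_(j < K) ip (uu j) (uu j)) + Num.max (ip (uu K) (uu K)) Bv) => k.
apply: le_trans (mxnorm_le _) _; rewrite -/(uu k) -addrA lerD2l.
have s0 : 0 <= \sum_(j < K) ip (uu j) (uu j) by apply: sumr_ge0 => j _; exact: nrm2_ge0.
have m0 : 0 <= Num.max (ip (uu K) (uu K)) Bv.
  by apply: le_trans (le_maxl' _ _); exact: nrm2_ge0.
have [kK|Kk] := ltnP k K.
  have : ip (uu k) (uu k) <= \sum_(j < K) ip (uu j) (uu j).
    rewrite (bigD1 (Ordinal kK)) //= lerDl; apply: sumr_ge0 => j _; exact: nrm2_ge0.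
  lra.
have := uK (k - K)%N; rewrite subnKC // => h; lra.
Qed.


Lemma ct_part :
  (forall (R : realType) (q : nat) (theta : 'cV[R]_q)
     (phi : R -> 'cV[R]_q) (d y : R -> R) (gamma_g : R -> R) (gam : R)
     (thg0 : 'cV[R]_q) (thg : R -> 'cV[R]_q) (Phi : R -> 'M[R]_q)
     (thh : R -> 'cV[R]_q),
   (exists M : R, forall t, 0 <= t -> `|phi t| <= M) ->
   {within `[0%R, +oo[, continuous phi} ->
   (exists M : R, forall t, 0 <= t -> `|d t| <= M) ->
   (forall t, 0 <= t -> y t = ((phi t)^T *m theta) 0 0 + d t) ->
   (exists tau : 'I_q -> R, (forall i, 0 < tau i) /\
      \rank (\matrix_(i < q, j < q) phi (tau j) i 0) = q) ->
   (forall t, 0 <= t -> 0 < gamma_g t) ->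
   {within `[0%R, +oo[, continuous gamma_g} ->
   (\int[lebesgue_measure]_(t in `[0%R, +oo[) (gamma_g t)%:E < +oo)%E ->
   0 < gam ->
   thg 0 = thg0 ->
   Phi 0 = 1%:M ->
   {within `[0%R, +oo[, continuous thg} ->
   {within `[0%R, +oo[, continuous Phi} ->
   {within `[0%R, +oo[, continuous thh} ->
   (forall t : R, 0 < t -> is_derive t 1 thg
      (- gamma_g t *: (phi t *m (phi t)^T *m thg t)
       + (gamma_g t * y t) *: phi t)) ->
   (forall t : R, 0 < t -> is_derive t 1 Phi
      (- gamma_g t *: (phi t *m (phi t)^T *m Phi t))) ->
   (forall t : R, 0 < t -> is_derive t 1 thh
      ((gam * drem_Delta (Phi t)) *:
         (drem_Y (Phi t) (thg t) thg0 - drem_Delta (Phi t) *: thh t))) ->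
   exists M : R, forall t, 0 <= t -> `|thh t - theta| <= M).
Proof.
move=> R q theta phi d y gm gam thg0 thg Phi thh _ _ [Md Hd] Hy [tau [taup Hrank]]
  Hg0 cg Hint Hgam Hthg0 HPhi0 cthg cPhi cthh Dthg DPhi Dthh.
pose fx x t := ip (Phi t *m x) (Phi t *m x).
pose sx x t := ip (phi t) (Phi t *m x).
have fxc x : {within `[0%R, +oo[, continuous (fx x)}.
  by apply: cw_ip; exact: ecw_mulmxr.
have fxd x (t : R) : 0 < t -> is_derive t 1 (fx x) (- (2 * gm t * sx x t ^+ 2)).
  move=> t0; rewrite /sx -dPhi_val.
  exact: (ed_nrm2 (ed_mulmxr x (DPhi t t0))).
have fxn x (t : R) : 0 < t -> - (2 * gm t * sx x t ^+ 2) <= 0.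
  move=> t0; rewrite oppr_le0; apply: mulr_ge0; last exact: sqr_ge0.
  by apply: mulr_ge0 => //; apply: ltW; apply: Hg0; exact: ltW.
have fxm x (s t : R) : 0 <= s -> s <= t -> fx x t <= fx x s.
  exact: (mono_y (fxd x) (fxn x) (fxc x)).
have fx0 x : fx x 0 = ip x x by rewrite /fx HPhi0 mul1mx.
pose T := 1 + \sum_i tau i.
have sum0 : 0 <= \sum_i tau i by apply: sumr_ge0 => i _; exact: ltW.
have T0 : 0 < T by rewrite /T; lra.
have tauT i : tau i < T.
  rewrite /T (bigD1 i) //=.
  have : 0 <= \sum_(j | j != i) tau j by apply: sumr_ge0 => j _; exact: ltW.
  lra.
have strict x : x != 0 -> fx x T < ip x x.
  move=> xn0; rewrite ltNge; apply/negP => hT.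
  have eqt (t : R) : 0 <= t -> t <= T -> fx x t = ip x x.
    move=> t0 tT; apply/eqP; rewrite eq_le -{1}(fx0 x) fxm //=.
    by apply: le_trans hT _; exact: fxm.
  have s0 (t : R) : 0 < t -> t < T -> sx x t = 0.
    move=> t0 tT.
    have nr : \forall z \near t, fx x z = ip x x.
      have e0 : 0 < Num.min t (T - t) by rewrite lt_min t0 subr_gt0.
      have e1 : Num.min t (T - t) <= t by rewrite ge_min lexx.
      have e2 : Num.min t (T - t) <= T - t by rewrite ge_min lexx orbT.
      apply/nbhs_ballP; exists (Num.min t (T - t)) => // z.
      rewrite -ball_normE /= => hz.
      have := ler_norm (t - z); have : - (t - z) <= `|t - z| by rewrite -normrN ler_norm.
      move=> h1 h2; apply: eqt; lra.
    have := near_eq_is_derive nr (fxd x t t0) => -[_].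
    rewrite derive_cst => /esym /eqP; rewrite oppr_eq0 mulf_eq0 => /orP [|].
      rewrite mulf_eq0 pnatr_eq0 /= gt_eqF //; apply: Hg0; exact: ltW.
    by rewrite expf_eq0 /= => /eqP.
  have xfix (t : R) : 0 <= t -> t <= T -> Phi t *m x = x.
    move=> t0 tT; apply/matrixP => i j; rewrite (ord1 j).
    pose h z := (Phi z *m x) i 0.
    have hc : {within `[0%R, +oo[, continuous h} by exact: ecw_mulmxr.
    have hd (z : R) : 0 < z -> z < t -> is_derive z 1 h 0.
      move=> z0 zt; have := ed_mulmxr x (DPhi z z0) i.
      rewrite dPhi_mul -/(sx x z) s0 //; last exact: lt_le_trans zt tT.
      by rewrite mulr0 scale0r mxE.
    have hd' (z : R) : 0 < z -> z < t -> is_derive z 1 (fun z => - h z) 0.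
      by move=> z0 zt; rewrite -oppr0; apply: isdN; exact: hd.
    have c1 : {within `[0, t], continuous h}.
      by apply: continuous_subspaceW hc; apply: subset_itvl; rewrite bnd_simp.
    have c2 : {within `[0, t], continuous (fun z => - h z)}.
      exact: cwN.
    have a1 := nincr t0 hd (fun _ _ _ => lexx 0) c1.
    have a2 := nincr t0 hd' (fun _ _ _ => lexx 0) c2.
    have : h 0 = x i 0 by rewrite /h HPhi0 mul1mx.
    rewrite /h in a1 a2 *; lra.
  apply/negP: xn0; rewrite negbK; apply/eqP.
  apply: (rank_ip0 Hrank) => i.
  rewrite ipC -{1}(xfix (tau i) (ltW (taup i)) (ltW (tauT i))).
  exact: s0.
have [eps [e0 e1 Heps]] := contr_unif strict.
set kk := eps ^+ 2 / 4.
have kk0 : 0 < kk by rewrite /kk; apply: divr_gt0 => //; exact: exprn_gt0.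
have invb (t : R) : T <= t -> forall x,
    kk * ip x x <= ip ((1%:M - Phi t) *m x) ((1%:M - Phi t) *m x).
  move=> Tt; apply: inv_bound => // x.
  apply: le_trans (Heps x); exact: fxm (ltW T0) Tt.
pose ee t := thg t - Phi t *m (thg0 - theta) - theta.
pose E t := ip (ee t) (ee t).
have Ec : {within `[0%R, +oo[, continuous E}.
  apply: cw_ip; apply: ecwB; (apply: ecwB; [exact: ecw_of|exact: ecw_mulmxr]) || exact: ecw_cst.
have [Md2 Hd2] : exists Md2, forall t, 0 <= t -> d t ^+ 2 <= Md2.
  exists (Md ^+ 2) => t t0; rewrite -(real_normK (num_real (d t))).
  by rewrite !expr2; apply: ler_pM; rewrite ?normr_ge0 //; exact: Hd.
have Md20 : 0 <= Md2 by apply: le_trans (Hd2 0 (lexx 0)); exact: sqr_ge0.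
pose dE t := gm t * (d t - ip (phi t) (ee t)) * ip (phi t) (ee t) * 2.
have Ed (t : R) : 0 < t -> is_derive t 1 E (dE t).
  move=> t0.
  have h := ed_nrm2 (edB (edB (ed_of (Dthg t t0)) (ed_mulmxr (thg0 - theta) (DPhi t t0)))
     (ed_cst theta t)).
  rewrite (Hy t (ltW t0)) tr_mul00 de_val in h.
  by rewrite /dE mulrC.
have [Gm [G0 Gd Gc]] := integral_facts Hg0 cg Hint.
set G := fun t : R => (\int[lebesgue_measure]_(x in `[0, t]) gm x)%R in G0 Gd Gc.
have ee0 : ee 0 = 0.
  by rewrite /ee Hthg0 HPhi0 mul1mx; apply/matrixP => i j; rewrite !mxE; ring.
have EB (t : R) : 0 <= t -> E t <= Md2 / 2 * Gm.
  move=> t0.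
  pose F z := E z - Md2 / 2 * G z.
  have Fd (z : R) : 0 < z -> z < t -> is_derive z 1 F (dE z - Md2 / 2 * gm z).
    move=> z0 _; apply: isdB; first exact: Ed.
    have := isdM (isd_cst (Md2 / 2) z) (Gd z z0).
    by rewrite mulr0 addr0.
  have Fn (z : R) : 0 < z -> z < t -> dE z - Md2 / 2 * gm z <= 0.
    move=> z0 _; rewrite /dE.
    have gz : 0 < gm z by apply: Hg0; exact: ltW.
    have dz := Hd2 z (ltW z0).
    set s := ip (phi z) (ee z).
    have : 0 <= gm z * (s - d z / 2) ^+ 2 by apply: mulr_ge0; [exact: ltW|exact: sqr_ge0].
    have : gm z * d z ^+ 2 <= gm z * Md2 by apply: ler_wpM2l => //; exact: ltW.
    nra.
  have Fc : {within `[0, t], continuous F}.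
    apply: cwB.
      by apply: continuous_subspaceW Ec; apply: subset_itvl; rewrite bnd_simp.
    by apply: cwM; [exact: cw_cst| exact: Gc].
  have := nincr t0 Fd Fn Fc.
  rewrite /F /E ee0 ip0l.
  have := G0 t t0; have := G0 0 (lexx 0).
  move=> /andP [g00 _] /andP [_ gt].
  have : Md2 / 2 * G t <= Md2 / 2 * Gm by apply: ler_wpM2l => //; lra.
  have : 0 <= Md2 / 2 * G 0 by apply: mulr_ge0 => //; lra.
  lra.
pose uu t := thh t - theta.
pose V t := ip (uu t) (uu t).
have Vc : {within `[0%R, +oo[, continuous V}.
  by apply: cw_ip; apply: ecwB; [exact: ecw_of|exact: ecw_cst|exact: ecw_of|exact: ecw_cst].
pose dV t := 2 * ip (uu t) (((gam * drem_Delta (Phi t)) *: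
         (drem_Y (Phi t) (thg t) thg0 - drem_Delta (Phi t) *: thh t)) - 0).
have Vd (t : R) : 0 < t -> is_derive t 1 V (dV t).
  move=> t0; exact: (ed_nrm2 (edB (ed_of (Dthh t t0)) (ed_cst theta t))).
set Bv := Md2 / 2 * Gm / kk.
have Vn (t : R) : T < t -> Bv <= V t -> dV t <= 0.
  move=> Tt VB.
  have [dn0 Hv] := drem_solve kk0 (invb t (ltW Tt)).
  have [v [Dv hv vb]] := Hv (ee t).
  have hY := Y_identity (thh t) hv.
  rewrite /dV /drem_Y /drem_Delta /drem_D hY subr0 scalerA ipZr -/(uu t).
  have vB : ip v v <= Bv.
    rewrite /Bv ler_pdivlMr // mulrC; apply: le_trans vb (EB t _).
    by apply: ltW; apply: lt_trans T0 Tt.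
  have := ip_le2 (uu t) v.
  rewrite ipBr -/(V t).
  set D0 := \det (1%:M - Phi t).
  have : 0 <= gam * D0 * D0 by rewrite -mulrA; apply: mulr_ge0; [exact: ltW| rewrite -expr2; exact: sqr_ge0].
  set c := gam * D0 * D0; set a := ip (uu t) v.
  move=> c0 h.
  have : c * (a - V t) <= 0 by apply: mulr_ge0_le0 => //; lra.
  lra.
have VT (t : R) : T <= t -> V t <= Num.max (V T) Bv.
  apply: (barrier (df := dV)).
  - by move=> z Tz; apply: Vd; exact: lt_trans T0 Tz.
  - exact: Vn.
  - by apply: continuous_subspaceW Vc; apply: subset_itvr; rewrite bnd_simp ltW.
have VcT : {within `[0, T], continuous V}.
  by apply: continuous_subspaceW Vc; apply: subset_itvl; rewrite bnd_simp.
have [c c0T Vmax] := EVT_max (ltW T0) VcT.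
exists (1 + V c + Num.max (V T) Bv) => t t0.
apply: le_trans (mxnorm_le _) _; rewrite -/(uu t) -/(V t) -addrA lerD2l.
have Vc0 : 0 <= V c by exact: nrm2_ge0.
have m0 : 0 <= Num.max (V T) Bv by rewrite le_max nrm2_ge0.
have [tT|Tt] := leP t T.
  have : V t <= V c by apply: Vmax; rewrite in_itv /= t0 tT.
  lra.
have := VT t (ltW Tt); lra.
Qed.


Unset Implicit Arguments.

Theorem proposition4 :
  (* ---------------- Continuous time ---------------- *)
  (forall (R : realType) (q : nat) (theta : 'cV[R]_q)
     (phi : R -> 'cV[R]_q) (d y : R -> R) (gamma_g : R -> R) (gam : R)
     (thg0 : 'cV[R]_q) (thg : R -> 'cV[R]_q) (Phi : R -> 'M[R]_q)
     (thh : R -> 'cV[R]_q),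
   (* bounded, continuous regressor *)
   (exists M : R, forall t, 0 <= t -> `|phi t| <= M) ->
   {within `[0%R, +oo[, continuous phi} ->
   (* bounded perturbation and perturbed regression *)
   (exists M : R, forall t, 0 <= t -> `|d t| <= M) ->
   (forall t, 0 <= t -> y t = ((phi t)^T *m theta) 0 0 + d t) ->
   (* identifiability *)
   (exists tau : 'I_q -> R, (forall i, 0 < tau i) /\
      \rank (\matrix_(i < q, j < q) phi (tau j) i 0) = q) ->
   (* gain *)
   (forall t, 0 <= t -> 0 < gamma_g t) ->
   {within `[0%R, +oo[, continuous gamma_g} ->
   (\int[lebesgue_measure]_(t in `[0%R, +oo[) (gamma_g t)%:E < +oo)%E ->
   0 < gam ->
   (* estimator dynamics *)
   thg 0 = thg0 ->
   Phi 0 = 1%:M ->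
   {within `[0%R, +oo[, continuous thg} ->
   {within `[0%R, +oo[, continuous Phi} ->
   {within `[0%R, +oo[, continuous thh} ->
   (forall t : R, 0 < t -> is_derive t 1 thg
      (- gamma_g t *: (phi t *m (phi t)^T *m thg t)
       + (gamma_g t * y t) *: phi t)) ->
   (forall t : R, 0 < t -> is_derive t 1 Phi
      (- gamma_g t *: (phi t *m (phi t)^T *m Phi t))) ->
   (forall t : R, 0 < t -> is_derive t 1 thh
      ((gam * drem_Delta (Phi t)) *:
         (drem_Y (Phi t) (thg t) thg0 - drem_Delta (Phi t) *: thh t))) ->
   (* conclusion: bounded parameter error *)
   exists M : R, forall t, 0 <= t -> `|thh t - theta| <= M)
  /\
  (* ---------------- Discrete time ---------------- *)
  (forall (R : realType) (q : nat) (theta : 'cV[R]_q)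
     (phi : nat -> 'cV[R]_q) (d y : nat -> R) (gamma_g : nat -> R) (gam : R)
     (thg0 : 'cV[R]_q) (thg : nat -> 'cV[R]_q) (Phi : nat -> 'M[R]_q)
     (thh : nat -> 'cV[R]_q),
   (exists M : R, forall k, `|phi k| <= M) ->
   (exists M : R, forall k, `|d k| <= M) ->
   (forall k, y k = ((phi k)^T *m theta) 0 0 + d k) ->
   (exists tau : 'I_q -> nat,
      \rank (\matrix_(i < q, j < q) phi (tau j) i 0) = q) ->
   (forall k, 0 < gamma_g k) ->
   (\sum_(0 <= k <oo) ((gamma_g k)^-1)%:E < +oo)%E ->
   0 < gam ->
   let g := fun k => (gamma_g k + ((phi k)^T *m phi k) 0 0)^-1 in
   thg 0%N = thg0 ->
   Phi 0%N = 1%:M ->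
   (forall k, thg k.+1 = (1%:M - g k *: (phi k *m (phi k)^T)) *m thg k
                         + (g k * y k) *: phi k) ->
   (forall k, Phi k.+1 = (1%:M - g k *: (phi k *m (phi k)^T)) *m Phi k) ->
   (forall k, thh k.+1 = thh k
      + (drem_Delta (Phi k) / (gam + drem_Delta (Phi k) ^+ 2)) *:
          (drem_Y (Phi k) (thg k) thg0 - drem_Delta (Phi k) *: thh k)) ->
   exists M : R, forall k, `|thh k - theta| <= M).
Proof.
split; [exact: ct_part | exact: dt_part].
Qed.
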